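(* Let $\mathfrak{g}$ be a finite-dimensional real Lie algebra and let $h\colon \mathfrak{g}^{*} \to \mathbb{R}$ be smooth. Fix a choice of sign $\pm$ and define $\mathbf{M}_{\pm}\colon T^{*}\mathfrak{g} = \mathfrak{g}\times\mathfrak{g}^{*} \to \mathfrak{g}^{*}$ by $\mathbf{M}_{\pm}(q,p) = \mp\operatorname{ad}_{q}^{*}p$, and $H\colon T^{*}\mathfrak{g} \to \mathbb{R}$ by $H(q,p) = h(\mathbf{M}_{\pm}(q,p)) = h(\mp\operatorname{ad}_{q}^{*}p)$. Let $t \mapsto (q(t),p(t))$ be a solution of the canonical Hamiltonian system $\dot{q} = \partial H/\partial p$, $\dot{p} = -\partial H/\partial q$ on $T^{*}\mathfrak{g} \cong T^{*}\mathbb{R}^{n}$. Then $t \mapsto \mu(t) := \mathbf{M}_{\pm}(q(t),p(t))$ is a solution of the Lie--Poisson equation $$\dot{\mu} = \mp\operatorname{ad}_{Dh(\mu)}^{*}\mu .$$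
   Context: $n = \dim\mathfrak{g}$; $\langle\cdot,\cdot\rangle$ is the natural pairing $\mathfrak{g}^{*}\times\mathfrak{g}\to\mathbb{R}$. For $x \in \mathfrak{g}$, $\operatorname{ad}_{x}y = [x,y]$ and $\operatorname{ad}_{x}^{*}\colon\mathfrak{g}^{*}\to\mathfrak{g}^{*}$ is its dual, $\langle \operatorname{ad}_{x}^{*}\alpha, y\rangle = \langle \alpha, [x,y]\rangle$. $T^{*}\mathfrak{g}$ is identified with $\mathfrak{g}\times\mathfrak{g}^{*}$ and carries the canonical symplectic structure; in a basis $\{E_i\}$ of $\mathfrak{g}$ with dual basis, $q = q^{i}E_i$, $p = p_i E^{i}_{*}$ and Hamilton's equations are $\dot q^{i} = \partial H/\partial p_i$, $\dot p_i = -\partial H/\partial q^{i}$. For smooth $f\colon\mathfrak{g}^{*}\to\mathbb{R}$, $Df(\mu)\in\mathfrak{g}$ is defined by $\langle \delta\mu, Df(\mu)\rangle = \frac{d}{ds}\big|_{s=0} f(\mu+s\delta\mu)$ for all $\delta\mu\in\mathfrak{g}^{*}$. The equation $\dot\mu = \mp\operatorname{ad}^{*}_{Dh(\mu)}\mu$ is the Hamiltonian equation of $h$ with respect to the $(\pm)$-Lie--Poisson bracket $\{f,g\}_{\pm}(\mu) = \pm\langle \mu, [Df(\mu), Dg(\mu)]\rangle$. *)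

(* Defs.v *)
From HB Require Import structures.
From mathcomp Require Import all_boot all_order all_algebra.
From mathcomp Require Import all_classical all_reals all_analysis.
Set Implicit Arguments. Unset Strict Implicit. Unset Printing Implicit Defensive.
Import Order.TTheory GRing.Theory Num.Theory.
Import numFieldNormedType.Exports.
Local Open Scope ring_scope.
Local Open Scope classical_set_scope.

(* g is identified with R^n = 'rV[R]_n via a basis {E_i}; g^* with 'rV[R]_n via
   the dual basis.  E_i is the standard basis vector. *)
Definition basis_vec (R : realType) (n : nat) (i : 'I_n) : 'rV[R]_n :=
  delta_mx 0 i.

Definition pairing (R : realType) (n : nat) (alpha x : 'rV[R]_n) : R :=
  \sum_(i < n) alpha 0 i * x 0 i.

Definition is_lie_bracket (R : realType) (n : nat)
    (br : 'rV[R]_n -> 'rV[R]_n -> 'rV[R]_n) : Prop :=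
  [/\ (forall (a : R) x y z, br (a *: x + y) z = a *: br x z + br y z),
      (forall (a : R) x y z, br z (a *: x + y) = a *: br z x + br z y),
      (forall x y, br x y = - br y x) &
      (forall x y z, br x (br y z) + br y (br z x) + br z (br x y) = 0)].

Definition adstar (R : realType) (n : nat)
    (br : 'rV[R]_n -> 'rV[R]_n -> 'rV[R]_n) (x alpha : 'rV[R]_n) : 'rV[R]_n :=
  \row_(j < n) pairing alpha (br x (basis_vec R j)).

(* Df(mu) in g: coordinates are the partial derivatives (directional
   derivatives along the dual basis vectors). *)
Definition Dfun (R : realType) (n : nat) (f : 'rV[R]_n -> R) (mu : 'rV[R]_n)
  : 'rV[R]_n :=
  \row_(i < n) ('D_(basis_vec R i) f mu).

Fixpoint Ck (R : realType) (n : nat) (k : nat) (f : 'rV[R]_n -> R) : Prop :=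
  match k with
  | 0 => continuous f
  | k'.+1 => (forall x, differentiable f x) /\
             (forall v : 'rV[R]_n, Ck k' (fun x => 'D_v f x))
  end.

Definition smooth (R : realType) (n : nat) (f : 'rV[R]_n -> R) : Prop :=
  forall k, Ck k f.

(* the sign: true <-> upper sign "+" in (pm), false <-> lower sign "-";
   sgn b = +1 / -1, so "mp" = - sgn b. *)
Definition sgn (R : realType) (b : bool) : R := if b then 1 else -1.

Definition Mmap (R : realType) (n : nat) (br : 'rV[R]_n -> 'rV[R]_n -> 'rV[R]_n)
    (b : bool) (q p : 'rV[R]_n) : 'rV[R]_n :=
  - sgn R b *: adstar br q p.

Definition Hcoll (R : realType) (n : nat) (br : 'rV[R]_n -> 'rV[R]_n -> 'rV[R]_n)
    (b : bool) (h : 'rV[R]_n -> R) (q p : 'rV[R]_n) : R :=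
  h (Mmap br b q p).

Definition hamiltonian_solution (R : realType) (n : nat)
    (H : 'rV[R]_n -> 'rV[R]_n -> R) (I : set R) (q p : R -> 'rV[R]_n) : Prop :=
  forall t, I t ->
    [/\ derivable q t 1, derivable p t 1,
        'D_1 q t = \row_(i < n) ('D_(basis_vec R i) (fun p' => H (q t) p') (p t)) &
        'D_1 p t = - \row_(i < n) ('D_(basis_vec R i) (fun q' => H q' (p t)) (q t))].

Definition lie_poisson_solution (R : realType) (n : nat)
    (br : 'rV[R]_n -> 'rV[R]_n -> 'rV[R]_n) (b : bool) (h : 'rV[R]_n -> R)
    (I : set R) (mu : R -> 'rV[R]_n) : Prop :=
  forall t, I t ->
    derivable mu t 1 /\ 'D_1 mu t = - sgn R b *: adstar br (Dfun h (mu t)) (mu t).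

(* Main.v *)
Require Import Defs.
From HB Require Import structures.
From mathcomp Require Import all_boot all_order all_algebra.
From mathcomp Require Import all_classical all_reals all_analysis.
Import Order.TTheory GRing.Theory Num.Theory.
Import numFieldNormedType.Exports.
Local Open Scope ring_scope.
Local Open Scope classical_set_scope.

Section Alg.
Variables (R : realType) (n : nat) (br : 'rV[R]_n -> 'rV[R]_n -> 'rV[R]_n).
Hypothesis Hbr : is_lie_bracket br.
Implicit Types (al be x y z u v p q xi : 'rV[R]_n).

Lemma pairingDZl (a : R) al be x :
  pairing (a *: al + be) x = a * pairing al x + pairing be x.
Proof.
rewrite /pairing mulr_sumr -big_split /=; apply: eq_bigr => i _.
by rewrite !mxE mulrDl mulrA.
Qed.

Lemma pairingDZr (a : R) al x y :
  pairing al (a *: x + y) = a * pairing al x + pairing al y.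
Proof.
rewrite /pairing mulr_sumr -big_split /=; apply: eq_bigr => i _.
by rewrite !mxE mulrDr mulrCA.
Qed.

Lemma pairingNr al x : pairing al (- x) = - pairing al x.
Proof. by rewrite /pairing -sumrN; apply: eq_bigr => i _; rewrite mxE mulrN. Qed.

Lemma pairing_basisr v j : pairing v (basis_vec R j) = v 0 j.
Proof.
rewrite /pairing (bigD1 j) //= big1 ?addr0; first by rewrite /basis_vec mxE !eqxx mulr1.
by move=> i /negbTE ij; rewrite /basis_vec mxE ij andbF mulr0.
Qed.

Lemma pairing_basisl v j : pairing (basis_vec R j) v = v 0 j.
Proof.
rewrite /pairing (bigD1 j) //= big1 ?addr0; first by rewrite /basis_vec mxE !eqxx mul1r.
by move=> i /negbTE ij; rewrite /basis_vec mxE ij andbF mul0r.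
Qed.

Lemma br0l z : br 0 z = 0.
Proof.
case: Hbr => H1 _ _ _; have e := H1 1 0 0 z.
rewrite !scale1r addr0 in e; apply: (addrI (br 0 z)); by rewrite addr0 -e.
Qed.

Lemma br0r z : br z 0 = 0.
Proof.
case: Hbr => _ H1 _ _; have e := H1 1 0 0 z.
rewrite !scale1r addr0 in e; apply: (addrI (br z 0)); by rewrite addr0 -e.
Qed.

Lemma brDl x y z : br (x + y) z = br x z + br y z.
Proof. by case: Hbr => H1 _ _ _; have := H1 1 x y z; rewrite !scale1r. Qed.
Lemma brDr x y z : br z (x + y) = br z x + br z y.
Proof. by case: Hbr => _ H1 _ _; have := H1 1 x y z; rewrite !scale1r. Qed.
Lemma brZl a x z : br (a *: x) z = a *: br x z.
Proof. by case: Hbr => H1 _ _ _; have := H1 a x 0 z; rewrite br0l !addr0. Qed.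
Lemma brZr a x z : br z (a *: x) = a *: br z x.
Proof. by case: Hbr => _ H1 _ _; have := H1 a x 0 z; rewrite br0r !addr0. Qed.
Lemma brNr x z : br z (- x) = - br z x.
Proof. by rewrite -scaleN1r brZr scaleN1r. Qed.
Lemma brNl x z : br (- x) z = - br x z.
Proof. by rewrite -scaleN1r brZl scaleN1r. Qed.

Lemma brsumr z (a : 'I_n -> R) (v : 'I_n -> 'rV[R]_n) :
  br z (\sum_k a k *: v k) = \sum_k a k *: br z (v k).
Proof.
elim/big_rec2: _ => [|i y1 y2 _ <-]; first exact: br0r.
by rewrite brDr brZr.
Qed.

Lemma brsuml z (a : 'I_n -> R) (v : 'I_n -> 'rV[R]_n) :
  br (\sum_k a k *: v k) z = \sum_k a k *: br (v k) z.
Proof.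
elim/big_rec2: _ => [|i y1 y2 _ <-]; first exact: br0l.
by rewrite brDl brZl.
Qed.

Lemma adstar_pair x al y : pairing (adstar br x al) y = pairing al (br x y).
Proof.
rewrite {2}(row_sum_delta y) brsumr /pairing.
under [RHS]eq_bigr do rewrite summxE mulr_sumr.
rewrite exchange_big /=; apply: eq_bigr => j _.
rewrite !mxE mulr_suml; apply: eq_bigr => i _.
by rewrite !mxE mulrCA mulrC.
Qed.

Lemma row_eq_pair (u v : 'rV[R]_n) :
  (forall y, pairing u y = pairing v y) -> u = v.
Proof.
by move=> H; apply/rowP => j; rewrite -!(pairing_basisr _ j) H.
Qed.

Lemma adstarDZl a x y al :
  adstar br (a *: x + y) al = a *: adstar br x al + adstar br y al.
Proof.
apply/rowP => j; rewrite !mxE /adstar.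
case: Hbr => H1 _ _ _; by rewrite H1 pairingDZr.
Qed.

Lemma adstarDZr a x al be :
  adstar br x (a *: al + be) = a *: adstar br x al + adstar br x be.
Proof. by apply/rowP => j; rewrite !mxE pairingDZl. Qed.

Lemma pairingDl al be x : pairing (al + be) x = pairing al x + pairing be x.
Proof. by rewrite -[al]scale1r pairingDZl mul1r scale1r. Qed.
Lemma pairingDr al x y : pairing al (x + y) = pairing al x + pairing al y.
Proof. by rewrite -[x]scale1r pairingDZr mul1r scale1r. Qed.

Lemma br_id q xi y : br (br q xi) y + br xi (br q y) = br q (br xi y).
Proof.
case: Hbr => _ _ Ha Hj.
have e := Hj q xi y.
rewrite (Ha y (br q xi)) (Ha y q) brNr in e.
apply/eqP; rewrite eq_sym -subr_eq0; apply/eqP; rewrite -[RHS]e.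
by rewrite opprD addrA [RHS]addrAC.
Qed.

Lemma key_identity q xi p :
  adstar br (br q xi) p + adstar br q (adstar br xi p) =
  adstar br xi (adstar br q p).
Proof.
apply: row_eq_pair => y.
by rewrite pairingDl !adstar_pair -pairingDr br_id.
Qed.

Lemma pairingZl a al x : pairing (a *: al) x = a * pairing al x.
Proof. by rewrite /pairing mulr_sumr; apply: eq_bigr => i _; rewrite mxE mulrA. Qed.
Lemma pairingZr a al x : pairing al (a *: x) = a * pairing al x.
Proof. by rewrite /pairing mulr_sumr; apply: eq_bigr => i _; rewrite mxE mulrCA. Qed.
Lemma adstarZl a x al : adstar br (a *: x) al = a *: adstar br x al.
Proof. by apply/rowP => j; rewrite !mxE brZl pairingZr. Qed.
Lemma adstarZr a x al : adstar br x (a *: al) = a *: adstar br x al.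
Proof. by apply/rowP => j; rewrite !mxE pairingZl. Qed.

Lemma adstar_coord x al j :
  adstar br x al 0 j = \sum_i \sum_k (al 0 i * x 0 k) * br (basis_vec R k) (basis_vec R j) 0 i.
Proof.
rewrite mxE /pairing; apply: eq_bigr => i _.
rewrite {1}(row_sum_delta x) brsuml summxE mulr_sumr; apply: eq_bigr => k _.
by rewrite mxE mulrA.
Qed.
End Alg.

Section Ana.
Variables (R : realType) (n : nat).

Lemma D_comp_lin (f : 'rV[R]_n -> R) (L : 'rV[R]_n -> 'rV[R]_n) x v :
  (forall (a : R) y z, L (a *: y + z) = a *: L y + L z) ->
  'D_v (fun y => f (L y)) x = 'D_(L v) f (L x).
Proof.
move=> HL; rewrite /derive /=.
have -> : (fun h : R => h^-1 *: (f (L (h *: v + x)) - f (L x))) =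
  (fun h : R => h^-1 *: (f (h *: L v + L x) - f (L x))).
  by apply: funext => a; rewrite HL.
by [].
Qed.

Lemma Dh_pair (h : 'rV[R]_n -> R) mu w : differentiable h mu ->
  'D_w h mu = pairing w (Dfun h mu).
Proof.
move=> dh; rewrite deriveE // {1}(row_sum_delta w) linear_sum /pairing.
apply: eq_bigr => i _; rewrite linearZ /= !mxE deriveE //.
Qed.

Lemma is_derive_fsum m t v (F : 'I_m -> R -> R) (dF : 'I_m -> R) :
  (forall i, is_derive t v (F i) (dF i)) ->
  is_derive t v (fun x => \sum_i F i x) (\sum_i dF i).
Proof.
move=> H; have := is_derive_sum H.
by have -> : (\sum_(i < m) F i) = (fun x => \sum_i F i x) by apply: funext => x; rewrite fct_sumE.
Qed.

Lemma is_derive_mul2 t v (f g : R -> R) df dg :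
  is_derive t v f df -> is_derive t v g dg ->
  is_derive t v (fun x => f x * g x) (f t * dg + g t * df).
Proof. move=> H1 H2; exact: (is_deriveM H1 H2). Qed.

Lemma is_derive_mulc t v (f : R -> R) df c :
  is_derive t v f df -> is_derive t v (fun x => f x * c) (df * c).
Proof.
move=> H; have := @is_derive_mul2 t v f (cst c) df 0 H (is_derive_cst c t v).
by rewrite mulr0 add0r mulrC.
Qed.

Lemma is_derive_coord (p : R -> 'rV[R]_n) t i : derivable p t 1 ->
  is_derive t 1 (fun x => p x 0 i) ('D_1 p t 0 i).
Proof.
move=> dp; have := derive_mx dp; move=> ->; rewrite mxE.
by apply: derivableP; move/derivable_mxP: dp; apply.
Qed.
End Ana.

Section Prod.
Variables (R : realType) (n : nat) (br : 'rV[R]_n -> 'rV[R]_n -> 'rV[R]_n).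
Hypothesis Hbr : is_lie_bracket br.

Lemma is_derive_adstar (q p : R -> 'rV[R]_n) t :
  derivable q t 1 -> derivable p t 1 ->
  is_derive t 1 (fun x => adstar br (q x) (p x))
    (adstar br ('D_1 q t) (p t) + adstar br (q t) ('D_1 p t)).
Proof.
move=> dq dp.
set c := fun k j i => br (basis_vec R k) (basis_vec R j) 0 i.
have Hc : forall j, is_derive t 1 (fun x => adstar br (q x) (p x) 0 j)
   (\sum_i \sum_k ((p t 0 i * 'D_1 q t 0 k + q t 0 k * 'D_1 p t 0 i) * c k j i)).
  move=> j.
  have -> : (fun x => adstar br (q x) (p x) 0 j) =
     (fun x => \sum_i \sum_k (p x 0 i * q x 0 k) * c k j i).
    by apply: funext => x; rewrite adstar_coord.
  apply: is_derive_fsum => i; apply: is_derive_fsum => k.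
  apply: is_derive_mulc; apply: is_derive_mul2; exact: is_derive_coord.
have dA : derivable (fun x => adstar br (q x) (p x)) t 1.
  apply/derivable_mxP => i j; rewrite (ord1 i); exact: (Hc j).(ex_derive).
apply: DeriveDef => //; rewrite derive_mx //; apply/matrixP => i j.
rewrite (ord1 i) mxE derive_val [RHS]mxE !(@adstar_coord _ _ _ Hbr) -big_split; apply: eq_bigr => a _.
rewrite -big_split; apply: eq_bigr => k _ /=.
by rewrite mulrDl [q t 0 k * _]mulrC.
Qed.
End Prod.

Theorem theorem3p1 (R : realType) (n : nat)
    (br : 'rV[R]_n -> 'rV[R]_n -> 'rV[R]_n) (b : bool) (h : 'rV[R]_n -> R)
    (I : set R) (q p : R -> 'rV[R]_n) :
  is_lie_bracket br -> smooth h -> open I ->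
  hamiltonian_solution (Hcoll br b h) I q p ->
  lie_poisson_solution br b h I (fun t => Mmap br b (q t) (p t)).
Proof.
move=> Hbr Hh _ Hham t It.
have aP := @adstar_pair R n br Hbr.
have aDZl := @adstarDZl R n br Hbr.
have aZl := @adstarZl R n br Hbr.
have kI := @key_identity R n br Hbr.
case: (Hham t It) => dq dp eq ep.
have [dh _] := Hh 1%N.
set s := sgn R b.
have ss : s * s = 1 by rewrite /s /sgn; case: (b); rewrite ?mulr1 ?mulrNN ?mulr1.
set mu := Mmap br b (q t) (p t).
set xi := Dfun h mu.
have Hq : 'D_1 q t = - s *: br (q t) xi.
  rewrite eq; apply/rowP => i; rewrite !mxE /Hcoll.
  rewrite (@D_comp_lin _ _ h (Mmap br b (q t))); last first.
    move=> a y z; rewrite /Mmap adstarDZr scalerDr !scalerA mulrC //.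
  rewrite Dh_pair // /Mmap pairingZl aP pairing_basisl.
  by [].
have Hp : 'D_1 p t = - s *: adstar br xi (p t).
  rewrite ep; apply/rowP => i; rewrite !mxE /Hcoll.
  rewrite (@D_comp_lin _ _ h (fun q' => Mmap br b q' (p t))); last first.
    move=> a y z; rewrite /Mmap aDZl scalerDr !scalerA mulrC //.
  rewrite Dh_pair // /Mmap pairingZl aP.
  case: Hbr => _ _ Ha _; rewrite Ha pairingNr.
  by rewrite mulrN mulNr opprK.
have HA := @is_derive_adstar R n br Hbr q p t dq dp.
have HM : is_derive t 1 (fun x => Mmap br b (q x) (p x))
   (- s *: (adstar br ('D_1 q t) (p t) + adstar br (q t) ('D_1 p t))).
  exact: (is_deriveZ (- s) HA).
split; first exact: HM.(ex_derive).
rewrite HM.(derive_val) Hq Hp aZl adstarZr -scalerDr scalerA.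
rewrite mulrNN ss scale1r kI /mu /Mmap adstarZr scalerA.
by rewrite mulrNN ss scale1r.
Qed.
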